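(* For every integer $n\ge 2$, the $n$-abomination $\mathbb{X}_n$ is $(n+1)$-colorable.
   Context: $\mathbb{N}=\{0,1,2,\dots\}$. Fix an integer $n\ge 2$ and put $N=2^{n+1}-1$. Let $T_n$ be the set of triples $\langle k_1,k_2,k_3\rangle$ of pairwise distinct natural numbers $\le N$, with a fixed enumeration $T_n=\{s_0,\dots,s_t\}$. Let $U_n$ be a set of pairwise distinct elements $a_m,b_m$ ($m\in\mathbb{N}$) and $c_{m,k},d_{m,k},e^a_{m,k},e^b_{m,k}$ ($m\in\mathbb{N}$, $0\le k\le N$). Define $x\prec y$ on $U_n$ iff one of: (1) $x=a_m$ and $y\in\{c_{m,k_1},c_{m,k_2}\}$, where $s_j=\langle k_1,k_2,k_3\rangle$ with $j\equiv m \bmod (t+1)$; (2) $x=b_m$ and $y\in\{c_{m,k_1},c_{m,k_3}\}$, with $s_j$ as in (1); (3) $m\ge1$, $x=c_{m,k}$, and either $y=e^a_{m-1,j}$ with $j\ne k$, or $y=e^b_{m-1,i}$ for any $i\le N$; (4) $x=d_{m,k}$ and $y=c_{m,j}$ with $j\neq k$; (5) $x=e^a_{m,k}$ and either $y=a_m$ or $y=d_{m,j}$ with $j\ne k$; (6) $x=e^b_{m,k}$ and either $y=b_m$ or $y=d_{m,j}$ with $j\ne k$. Let $\le$ be the reflexive transitive closure of $\prec$. The $n$-abomination $\mathbb{X}_n$ is the poset $U_n\cup\{\bot\}$ where $\bot$ is a new least element, with the topology in which $U$ is open iff $\bot\notin U$ or $U$ is cofinite; it is an Esakia space. An E-partition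 on an Esakia space $\mathbb{X}$ is an equivalence relation $R$ on $X$ such that (a) if $\langle x,y\rangle\in R$ and $x\le z$ then there is $w\ge y$ with $\langle z,w\rangle\in R$; (b) if $\langle x,y\rangle\notin R$ there is a clopen union of $R$-classes containing $x$ but not $y$. For $p\in\mathbb{N}$, $\mathbb{C}_p=\{0,1\}^p$ ordered componentwise. A weak $p$-coloring of $\mathbb{X}$ is an order-preserving map $f\colon X\to\{0,1\}^p$ with $f^{-1}(\vec c)$ clopen for all $\vec c$; it is a $p$-coloring if every E-partition on $\mathbb{X}$ other than the identity relates two elements of distinct color. $\mathbb{X}$ is $p$-colorable if it admits a $p$-coloring. *)

(* Defs.v *)
From mathcomp Require Import all_boot all_algebra.
From Stdlib Require Import Relations List.

Set Implicit Arguments.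
Unset Strict Implicit.
Unset Printing Implicit Defensive.

(* Indices k with 0 <= k <= N = 2^(n+1) - 1, i.e. k : 'I_(2^(n+1)). *)
Definition Kidx (n : nat) := 'I_(2 ^ n.+1).

(* Triples <k1,k2,k3> are encoded as ((k1,k2),k3). *)
Definition triple (n : nat) := (Kidx n * Kidx n * Kidx n)%type.

Definition triple_distinct (n : nat) (x : triple n) : Prop :=
  [/\ x.1.1 <> x.1.2, x.1.1 <> x.2 & x.1.2 <> x.2].

Definition is_enumeration (n t : nat) (s : 'I_t.+1 -> triple n) : Prop :=
  injective s /\ (forall x : triple n, (exists j, s j = x) <-> triple_distinct x).

Inductive pt (n : nat) : Type :=
| Bot
| Aa of nat
| Bb of nat
| Cc of nat & Kidx n
| Dd of nat & Kidx n
| Ea of nat & Kidx n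
| Eb of nat & Kidx n.

Arguments Bot {n}.

(* s_j with j = m mod (t+1) *)
Definition sel (n t : nat) (s : 'I_t.+1 -> triple n) (m : nat) : triple n :=
  s (inZp m).

Definition prec (n t : nat) (s : 'I_t.+1 -> triple n) (x y : pt n) : Prop :=
  match x, y with
  | Aa m, Cc m' k => m' = m /\ (k = (sel s m).1.1 \/ k = (sel s m).1.2)
  | Bb m, Cc m' k => m' = m /\ (k = (sel s m).1.1 \/ k = (sel s m).2)
  | Cc m k, Ea m' j => m = m'.+1 /\ j <> k
  | Cc m k, Eb m' i => m = m'.+1
  | Dd m k, Cc m' j => m' = m /\ j <> k
  | Ea m k, Aa m' => m' = m
  | Ea m k, Dd m' j => m' = m /\ j <> k
  | Eb m k, Bb m' => m' = m
  | Eb m k, Dd m' j => m' = m /\ j <> k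
  | _, _ => False
  end.

Definition le_ab (n t : nat) (s : 'I_t.+1 -> triple n) (x y : pt n) : Prop :=
  x = Bot \/ clos_refl_trans (pt n) (prec s) x y.

Definition cofinite (n : nat) (U : pt n -> Prop) : Prop :=
  exists l : list (pt n), forall x, ~ U x -> List.In x l.

Definition open_ab (n : nat) (U : pt n -> Prop) : Prop :=
  ~ U Bot \/ cofinite U.

Definition clopen_ab (n : nat) (U : pt n -> Prop) : Prop :=
  open_ab U /\ open_ab (fun x => ~ U x).

Definition is_equivalence (X : Type) (R : X -> X -> Prop) : Prop :=
  [/\ forall x, R x x, forall x y, R x y -> R y x
    & forall x y z, R x y -> R y z -> R x z].

Definition E_partition (n t : nat) (s : 'I_t.+1 -> triple n)
    (R : pt n -> pt n -> Prop) : Prop :=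
  [/\ is_equivalence R,
      (forall x y z, R x y -> le_ab s x z ->
         exists w, le_ab s y w /\ R z w)
    & (forall x y, ~ R x y ->
         exists U : pt n -> Prop,
           [/\ clopen_ab U,
               (forall u v, R u v -> U u -> U v),
               U x & ~ U y])].

Definition weak_coloring (n t : nat) (s : 'I_t.+1 -> triple n) (p : nat)
    (f : pt n -> {ffun 'I_p -> bool}) : Prop :=
  (forall x y, le_ab s x y -> forall i, f x i ==> f y i) /\
  (forall c : {ffun 'I_p -> bool}, clopen_ab (fun x => f x = c)).

Definition coloring (n t : nat) (s : 'I_t.+1 -> triple n) (p : nat)
    (f : pt n -> {ffun 'I_p -> bool}) : Prop :=
  weak_coloring s f /\
  (forall R, E_partition s R -> (exists x y, R x y /\ x <> y) ->
     exists x y, R x y /\ f x <> f y).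

Definition colorable (n t : nat) (s : 'I_t.+1 -> triple n) (p : nat) : Prop :=
  exists f : pt n -> {ffun 'I_p -> bool}, coloring s f.

(* Main.v *)
Require Import Defs.
From mathcomp Require Import all_boot all_algebra.
From mathcomp Require Import zify.
From Stdlib Require Import Relations Classical.
From Stdlib Require List.

Set Implicit Arguments.
Unset Strict Implicit.
Unset Printing Implicit Defensive.

Lemma in_list (T : eqType) (x : T) (l : seq T) : x \in l -> List.In x l.
Proof.
elim: l => //= a l IH; rewrite in_cons => /orP [/eqP ->|/IH]; by [left|right].
Qed.

Lemma card_col n : #|{ffun 'I_n.+1 -> bool}| = 2 ^ n.+1.
Proof. by rewrite card_ffun card_bool card_ord. Qed.

Definition gcol n (k : Kidx n) : {ffun 'I_n.+1 -> bool} :=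
  enum_val (cast_ord (esym (card_col n)) k).

Definition zc n : {ffun 'I_n.+1 -> bool} := [ffun _ => false].

Definition k0 n : Kidx n := cast_ord (card_col n) (enum_rank (zc n)).

Lemma gcol_inj n : injective (@gcol n).
Proof. by move=> a b /enum_val_inj /cast_ord_inj. Qed.

Lemma gcol_k0 n : gcol (k0 n) = zc n.
Proof. by rewrite /gcol /k0 cast_ordK enum_rankK. Qed.

Definition fcol n (x : pt n) : {ffun 'I_n.+1 -> bool} :=
  match x with
  | Cc m k => if m is 0 then gcol k else zc n
  | _ => zc n
  end.

Definition rk n (x : pt n) : nat :=
  match x with
  | Bot => 0
  | Aa m | Bb m => 3 * m + 1
  | Cc m _ => 3 * m
  | Dd m _ => 3 * m + 1
  | Ea m _ | Eb m _ => 3 * m + 2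
  end.

Section Rigid.
Variables (n t : nat) (s : 'I_t.+1 -> triple n).
Hypothesis n2 : 2 <= n.
Hypothesis Hd : forall m, triple_distinct (sel s m).

Local Notation pt := (pt n).
Local Notation prec := (prec s).
Local Notation rt := (clos_refl_trans pt prec).
Local Notation lea := (Defs.le_ab s).

Lemma prec_rk (x y : pt) : prec x y -> rk x = (rk y).+1.
Proof.
case: x => [|m|m|m k|m k|m k|m k]; case: y => [|m'|m'|m' k'|m' k'|m' k'|m' k'] //=;
  move=> H; repeat match goal with H : _ /\ _ |- _ => destruct H end; subst; lia.
Qed.

Lemma prec_nbot (x y : pt) : prec x y -> x <> Bot /\ y <> Bot.
Proof. by case: x; case: y. Qed.

Lemma rt_cases (x y : pt) : rt x y -> x = y \/ rk y < rk x.
Proof.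
move=> /(clos_rt_rt1n _ _ _ _) H; elim: H => [z|a b c Hab _ IH]; [by left|right].
have := prec_rk Hab; case: IH => [<-|]; lia.
Qed.

Lemma rt_nbot (x y : pt) : rt x y -> x <> Bot -> y <> Bot.
Proof.
move=> /(clos_rt_rt1n _ _ _ _) H; elim: H => // a b c Hab _ IH _; apply: IH; exact: (proj2 (prec_nbot Hab)).
Qed.

Lemma rt_cover (x z : pt) : rt x z -> rk x = (rk z).+1 -> prec x z.
Proof.
move=> /(clos_rt_rt1n _ _ _ _) H; case: H => [|b z2 Hab Hbc] Hr; first lia.
have := prec_rk Hab.
case: (rt_cases (clos_rt1n_rt _ _ _ _ Hbc)) => [<-//|]; lia.
Qed.

Lemma le_rt (x y : pt) : lea x y -> x <> Bot -> rt x y.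
Proof. by case. Qed.

Lemma le_trans (x y z : pt) : lea x y -> lea y z -> lea x z.
Proof.
case=> [->|Hxy]; first by left.
case: (classic (x = Bot)) => [->|Hx]; first by left.
case=> [Hy|Hyz]; first by case: (rt_nbot Hxy Hx).
by right; apply: rt_trans Hxy Hyz.
Qed.

Lemma avoid3 (a b c : Kidx n) : exists i : Kidx n, [/\ i <> a, i <> b & i <> c].
Proof.
have H4 : 4 <= 2 ^ n.+1.
  have H : 2 ^ 2 <= 2 ^ n by rewrite leq_exp2l.
  change (2 ^ 2) with 4 in H; rewrite expnS; lia.
have : ~~ all (fun i => i \in [:: val a; val b; val c]) (iota 0 4).
  apply/negP => /allP Hs.
  by have := uniq_leq_size (iota_uniq 0 4) Hs.
case/allPn => i; rewrite mem_iota => /andP [_ Hi] Hni.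
have Hi' : i < 2 ^ n.+1 by lia.
exists (Ordinal Hi'); split => Heq; move: Hni; by rewrite -Heq /= !inE eqxx ?orbT.
Qed.

Local Notation K1 m := (sel s m).1.1.
Local Notation K2 m := (sel s m).1.2.
Local Notation K3 m := (sel s m).2.

Lemma has_cover (y : pt) : y <> Bot -> 0 < rk y -> exists u, prec y u.
Proof.
case: y => [//|m|m|[|m] k|m k|m k|m k] _ /= Hr.
- by exists (Cc m (K1 m)); split=> //; left.
- by exists (Cc m (K1 m)); split=> //; left.
- lia.
- by exists (Eb m k).
- have [j [Hj _ _]] := avoid3 k k k; by exists (Cc m j).
- by exists (Aa n m).
- by exists (Bb n m).
Qed.

Lemma up_exists q (y : pt) : y <> Bot -> q <= rk y -> exists u, rk u = q /\ rt y u.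
Proof.
move Ed: (rk y - q) => d; elim: d y Ed => [|d IH] y Ed Hy Hq.
  by exists y; split; [lia | apply: rt_refl].
have [u Hu] := has_cover Hy ltac:(lia).
have Hr := prec_rk Hu.
have [_ Hub] := prec_nbot Hu.
have [v [Hv Huv]] := IH u ltac:(lia) Hub ltac:(lia).
exists v; split=> //; apply: rt_trans (rt_step _ _ _ _ Hu) Huv.
Qed.

Lemma rank_exists q : exists u : pt, u <> Bot /\ rk u = q.
Proof.
have [k _] := avoid3 (Ordinal (ltac:(by rewrite expn_gt0) : 0 < 2 ^ n.+1))
   (Ordinal (ltac:(by rewrite expn_gt0) : 0 < 2 ^ n.+1))
   (Ordinal (ltac:(by rewrite expn_gt0) : 0 < 2 ^ n.+1)).
have [m [->|[->|->]]] : exists m, q = 3 * m \/ q = 3 * m + 1 \/ q = 3 * m + 2.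
  by exists (q %/ 3); lia.
- by exists (Cc m k).
- by exists (Dd m k).
- by exists (Ea m k).
Qed.

Lemma LP (x u : pt) : x <> Bot -> u <> Bot -> 0 < rk x -> rk u = (rk x).+1 ->
  exists z, [/\ rt u z, (rk z).+1 = rk x & ~ prec x z].
Proof.
case: x => [//|m|m|m k|m k|m k|m k]; case: u => [//|m'|m'|m' k'|m' k'|m' k'|m' k'] _ _ /= Hx Hu; try lia.
- have ? : m' = m by lia. subst m'.
  have [i [Hi1 Hi2 _]] := avoid3 (K1 m) (K2 m) (K2 m).
  have [j [Hj1 Hj2 _]] := avoid3 k' i i.
  exists (Cc m i); split; [| rewrite /=; lia | by case=> _ [] ].
  apply: (@rt_trans _ _ _ (Dd m j)); apply: rt_step => //=; split=> //; exact: not_eq_sym.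
- have ? : m' = m by lia. subst m'.
  have [i [Hi1 Hi2 _]] := avoid3 (K1 m) (K2 m) (K2 m).
  have [j [Hj1 Hj2 _]] := avoid3 k' i i.
  exists (Cc m i); split; [| rewrite /=; lia | by case=> _ [] ].
  apply: (@rt_trans _ _ _ (Dd m j)); apply: rt_step => //=; split=> //; exact: not_eq_sym.
- have ? : m' = m by lia. subst m'.
  have [i [Hi1 Hi2 _]] := avoid3 (K1 m) (K3 m) (K3 m).
  have [j [Hj1 Hj2 _]] := avoid3 k' i i.
  exists (Cc m i); split; [| rewrite /=; lia | by case=> _ [] ].
  apply: (@rt_trans _ _ _ (Dd m j)); apply: rt_step => //=; split=> //; exact: not_eq_sym.
- have ? : m' = m by lia. subst m'.
  have [i [Hi1 Hi2 _]] := avoid3 (K1 m) (K3 m) (K3 m).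
  have [j [Hj1 Hj2 _]] := avoid3 k' i i.
  exists (Cc m i); split; [| rewrite /=; lia | by case=> _ [] ].
  apply: (@rt_trans _ _ _ (Dd m j)); apply: rt_step => //=; split=> //; exact: not_eq_sym.
- case: m Hx Hu => [|m] Hx Hu; first lia.
  have ? : m' = m.+1 by lia. subst m'.
  have [H12 _ _] := Hd m.+1.
  exists (Ea m k); split; [| rewrite /=; lia | by case=> _ ].
  case: (eqVneq (K1 m.+1) k) => [E|/eqP E].
  + apply: (@rt_trans _ _ _ (Cc m.+1 (K2 m.+1))); apply: rt_step => /=; split=> //.
    by right.
    by move=> E'; apply: H12; rewrite E E'.
  + apply: (@rt_trans _ _ _ (Cc m.+1 (K1 m.+1))); apply: rt_step => /=; split=> //.
    by left.
    exact: not_eq_sym.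
- case: m Hx Hu => [|m] Hx Hu; first lia.
  have ? : m' = m.+1 by lia. subst m'.
  have [_ H13 _] := Hd m.+1.
  exists (Ea m k); split; [| rewrite /=; lia | by case=> _ ].
  case: (eqVneq (K1 m.+1) k) => [E|/eqP E].
  + apply: (@rt_trans _ _ _ (Cc m.+1 (K3 m.+1))); apply: rt_step => /=; split=> //.
    by right.
    by move=> E'; apply: H13; rewrite E E'.
  + apply: (@rt_trans _ _ _ (Cc m.+1 (K1 m.+1))); apply: rt_step => /=; split=> //.
    by left.
    exact: not_eq_sym.
- case: m Hx Hu => [|m] Hx Hu; first lia.
  have ? : m' = m.+1 by lia. subst m'.
  have [j [Hj1 Hj2 _]] := avoid3 k' k k.
  exists (Ea m k); split; [| rewrite /=; lia | by case=> _ ].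
  apply: (@rt_trans _ _ _ (Cc m.+1 j)); apply: rt_step => //=; split=> //; exact: not_eq_sym.
- have ? : m' = m by lia. subst m'.
  have [j [Hj1 Hj2 _]] := avoid3 k' k k.
  exists (Cc m k); split; [| rewrite /=; lia | by case=> _ ].
  apply: (@rt_trans _ _ _ (Dd m j)); apply: rt_step => //=; split=> //; exact: not_eq_sym.
- have ? : m' = m by lia. subst m'.
  have [j [Hj1 Hj2 _]] := avoid3 k' k k.
  exists (Cc m k); split; [| rewrite /=; lia | by case=> _ ].
  apply: (@rt_trans _ _ _ (Dd m j)); apply: rt_step => //=; split=> //; exact: not_eq_sym.
- have ? : m' = m.+1 by lia. subst m'.
  exists (Bb n m); split; [| rewrite /=; lia | by [] ].
  by apply: (@rt_trans _ _ _ (Eb m k')); apply: rt_step.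
- have ? : m' = m.+1 by lia. subst m'.
  have [j [Hj1 _ _]] := avoid3 k' k' k'.
  exists (Aa n m); split; [| rewrite /=; lia | by [] ].
  by apply: (@rt_trans _ _ _ (Ea m j)); apply: rt_step => //=; split.
Qed.


Lemma SEP (x y : pt) : x <> Bot -> y <> Bot -> rk x = rk y -> 0 < rk x -> x <> y ->
  exists z, (prec x z /\ ~ prec y z) \/ (prec y z /\ ~ prec x z).
Proof.
case: x => [//|m|m|m k|m k|m k|m k]; case: y => [//|m'|m'|m' k'|m' k'|m' k'|m' k'] _ _ /= Hr Hx Hne; try lia.
all: have ? : m' = m by lia.
all: subst m'.
- by case: Hne.
- have [H12 _ H23] := Hd m.
  exists (Cc m (K2 m)); left; split; first by split=> //; right.
  case=> _ [E|E]; [by apply: H12 | by apply: H23].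
- have [i [Hi1 Hi2 Hi3]] := avoid3 k' (K1 m) (K2 m).
  exists (Cc m i); right; split; first by split.
  by case=> _ [].
- have [H12 _ H23] := Hd m.
  exists (Cc m (K2 m)); right; split; first by split=> //; right.
  case=> _ [E|E]; [by apply: H12 | by apply: H23].
- by case: Hne.
- have [i [Hi1 Hi2 Hi3]] := avoid3 k' (K1 m) (K3 m).
  exists (Cc m i); right; split; first by split.
  by case=> _ [].
- have Hk : k <> k' by move=> E; apply: Hne; rewrite E.
  case: m Hr Hx Hne => [|m] Hr Hx Hne; first lia.
  exists (Ea m k'); left; split; first by split=> //; exact: not_eq_sym.
  by case=> _; apply.
- have [i [Hi1 Hi2 Hi3]] := avoid3 k (K1 m) (K2 m).
  exists (Cc m i); left; split; first by split.
  by case=> _ [].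
- have [i [Hi1 Hi2 Hi3]] := avoid3 k (K1 m) (K3 m).
  exists (Cc m i); left; split; first by split.
  by case=> _ [].
- have Hk : k <> k' by move=> E; apply: Hne; rewrite E.
  exists (Cc m k'); left; split; first by split=> //; exact: not_eq_sym.
  by case=> _; apply.
- have Hk : k <> k' by move=> E; apply: Hne; rewrite E.
  exists (Dd m k); right; split; first by split.
  by case=> _; apply.
- by exists (Aa n m); left; split.
- by exists (Aa n m); right; split.
- have Hk : k <> k' by move=> E; apply: Hne; rewrite E.
  exists (Dd m k); right; split; first by split.
  by case=> _; apply.
Qed.


Lemma below_c0 (ko : Kidx n) (y : pt) : y <> Cc 0 ko -> exists j, j <> ko /\ lea y (Cc 0 j).
Proof.
move=> Hne.
case: (classic (y = Bot)) => [->|Hy].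
  have [j [Hj _ _]] := avoid3 ko ko ko.
  by exists j; split=> //; left.
case: (posnP (rk y)) => Hr.
- move: Hne Hy Hr; case: y => [//|m|m|[|m] k|m k|m k|m k] //= Hne Hy Hr; try lia.
  exists k; split; last by right; apply: rt_refl.
  by move=> E; apply: Hne; rewrite E.
- have [u [Hu Hyu]] := up_exists (q:=1) Hy Hr.
  case: u Hu Hyu => [|m|m|m k|m k|m k|m k] /= Hu Hyu; try lia.
  + have ? : m = 0 by lia. subst m.
    have [H12 _ _] := Hd 0.
    case: (eqVneq (K1 0) ko) => [E|/eqP E].
    * exists (K2 0); split; first by move=> E'; apply: H12; rewrite E E'.
      right; apply: rt_trans Hyu (rt_step _ _ _ _ _) => /=; split=> //; by right.
    * exists (K1 0); split=> //.
      right; apply: rt_trans Hyu (rt_step _ _ _ _ _) => /=; split=> //; by left.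
  + have ? : m = 0 by lia. subst m.
    have [_ H13 _] := Hd 0.
    case: (eqVneq (K1 0) ko) => [E|/eqP E].
    * exists (K3 0); split; first by move=> E'; apply: H13; rewrite E E'.
      right; apply: rt_trans Hyu (rt_step _ _ _ _ _) => /=; split=> //; by right.
    * exists (K1 0); split=> //.
      right; apply: rt_trans Hyu (rt_step _ _ _ _ _) => /=; split=> //; by left.
  + have ? : m = 0 by lia. subst m.
    have [j [Hj1 Hj2 _]] := avoid3 k ko ko.
    exists j; split=> //.
    right; apply: rt_trans Hyu (rt_step _ _ _ _ _) => /=; by split.
Qed.

Section RR.
Variable R : pt -> pt -> Prop.
Hypothesis Rsym : forall x y, R x y -> R y x.
Hypothesis Ra : forall x y z, R x y -> lea x z -> exists w, lea y w /\ R z w.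
Hypothesis Rf : forall x y, R x y -> fcol x = fcol y.

Definition sg (x : pt) := forall y, R x y -> y = x.

Lemma lemA x y z : R x y -> lea x z -> sg z -> lea y z.
Proof. move=> Hxy Hxz Hz; have [w [Hyw Hzw]] := Ra Hxy Hxz; by rewrite -(Hz _ Hzw). Qed.

Lemma sg_c0 k : k <> k0 n -> sg (Cc 0 k).
Proof.
move=> Hk y /Rf /= Hf.
have Hnz : gcol k <> zc n by rewrite -(gcol_k0 n) => /gcol_inj /Hk.
move: Hf; case: y => [|m|m|[|m] j|m j|m j|m j] /= Hf; try by exfalso; apply: Hnz.
by rewrite (gcol_inj Hf).
Qed.

Lemma sg_k0 : sg (Cc 0 (k0 n)).
Proof.
move=> y Hxy; apply: NNPP => Hne.
have [j [Hj Hyj]] := below_c0 Hne.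
have := lemA (Rsym Hxy) Hyj (sg_c0 Hj).
case=> [//|/rt_cases [[E]|/=]]; [by apply: Hj; rewrite -E|lia].
Qed.

Lemma all_sg r (x : pt) : x <> Bot -> rk x = r -> sg x.
Proof.
elim/ltn_ind: r x => r IH x Hx Hr.
case: (posnP r) => Hr0.
  move: Hx Hr; subst r; case: x => [//|m|m|[|m] k|m k|m k|m k] //= _ Hr; try lia.
  case: (classic (k = k0 n)) => [->|Hk]; [exact: sg_k0 | exact: sg_c0].
move=> y Hxy; apply: NNPP => Hne.
have sgS : forall z, z <> Bot -> rk z < r -> sg z.
  by move=> z Hz Hzr; exact: IH _ Hzr z Hz erefl.
case: (classic (y = Bot)) => [Hyb|Hyb].
  subst y. have [u [Hu Hru]] := rank_exists r.+1.
  have [z [Huz Hzr Hnp]] := LP Hx Hu ltac:(lia) ltac:(lia).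
  have Hzb := rt_nbot Huz Hu.
  have := lemA (Rsym Hxy) (or_introl erefl : lea Bot z) (sgS z Hzb ltac:(lia)).
  move/le_rt => /(_ Hx) Hxz. apply: Hnp. exact: (rt_cover Hxz (esym Hzr)).
case: (ltngtP (rk y) r) => Hyr.
- by apply: Hne; rewrite (sgS y Hyb Hyr x (Rsym Hxy)).
- have [u [Hru Hyu]] := up_exists (q := r.+1) Hyb Hyr.
  have Hu := rt_nbot Hyu Hyb.
  have [z [Huz Hzr Hnp]] := LP Hx Hu ltac:(lia) ltac:(lia).
  have Hzb := rt_nbot Huz Hu.
  have Hyz : lea y z by right; apply: rt_trans Hyu Huz.
  have := lemA (Rsym Hxy) Hyz (sgS z Hzb ltac:(lia)).
  move/le_rt => /(_ Hx) Hxz. apply: Hnp; exact: (rt_cover Hxz ltac:(lia)).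
- have [z [[Hp Hnp]|[Hp Hnp]]] := SEP Hx Hyb ltac:(lia) ltac:(lia) (fun E => Hne (esym E)).
  + have [_ Hzb] := prec_nbot Hp. have := prec_rk Hp => Hrz.
    have := lemA Hxy (or_intror (rt_step _ _ _ _ Hp)) (sgS z Hzb ltac:(lia)).
    move/le_rt => /(_ Hyb) Hyz. apply: Hnp; exact: (rt_cover Hyz ltac:(lia)).
  + have [_ Hzb] := prec_nbot Hp. have := prec_rk Hp => Hrz.
    have := lemA (Rsym Hxy) (or_intror (rt_step _ _ _ _ Hp)) (sgS z Hzb ltac:(lia)).
    move/le_rt => /(_ Hx) Hxz. apply: Hnp; exact: (rt_cover Hxz ltac:(lia)).
Qed.

Lemma rigid x y : R x y -> x = y.
Proof.
move=> Hxy.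
case: (classic (x = Bot)) => [Hx|Hx]; last by rewrite (all_sg Hx erefl Hxy).
case: (classic (y = Bot)) => [Hy|Hy]; first by rewrite Hx Hy.
by rewrite (all_sg Hy erefl (Rsym Hxy)).
Qed.
End RR.

End Rigid.

Theorem mainTheorem6 (n t : nat) (s : 'I_t.+1 -> triple n) :
  2 <= n -> is_enumeration s -> colorable s n.+1.
Proof.
move=> n2 [_ Henum].
have Hd : forall m, triple_distinct (sel s m) by move=> m; apply/Henum; exists (inZp m).
pose L := List.map (fun k => @Cc n 0 k) (enum 'I_(2 ^ n.+1)).
have HL : forall x, fcol x <> zc n -> List.In x L.
  case=> [|m|m|[|m] k|m k|m k|m k] //= H.
  by apply: List.in_map; apply: in_list; rewrite mem_enum.
exists (@fcol n); split; [split|].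
- move=> x y [->|Hxy] i; first by rewrite /= ffunE.
  case: (rt_cases n2 Hxy) => [->|Hlt]; first by rewrite implybb.
  move: Hlt; case: x {Hxy} => [|m|m|[|m] k|m k|m k|m k] /= Hlt; rewrite ?ffunE //; lia.
- move=> c; split.
  + case: (classic (c = zc n)) => [->|Hc].
      by right; exists L => x; exact: HL.
    by left => /= E; apply: Hc.
  + case: (classic (c = zc n)) => [->|Hc].
      by left => /= H; apply: H.
    right; exists L => x /NNPP E; apply: HL; by rewrite E.
- move=> R [[Rrefl Rsym Rtr] Ra _] [x [y [Hxy Hne]]].
  apply: NNPP => Hno; apply: Hne.
  apply: (rigid n2 Hd Rsym Ra _ Hxy).
  move=> a b Hab; apply: NNPP => Hf; apply: Hno; by exists a, b.
Qed.
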